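(* Let $K$ be an algebraically closed field complete with respect to a non-archimedean absolute value, let $\lambda_3\in K$, let $\sqrt{1-\lambda_3}$ denote a fixed square root, and let $\varphi(z)=z+\sqrt{1-\lambda_3}+\frac1z$. Let $\xi$ be the unique point of $\mathbb{P}^1_{\mathrm{Berk}}$ with $w_\varphi(\xi)=1$. (A) If $|\lambda_3|\le1$, then $\xi=\zeta_G$ and $\xi$ satisfies (W1). (B) If $|\lambda_3|>1$, then $\xi=\zeta_{D(0,\sqrt{|\lambda_3|})}$ and $\xi$ satisfies (W3).
   Context: $\varphi$ has degree 2, fixed points $\infty$ (double, multiplier $1$) and $-1/\sqrt{1-\lambda_3}$ (multiplier $\lambda_3$). $\mathbb{P}^1_{\mathrm{Berk}}$ is the Berkovich projective line over $K$; $\zeta_{D(a,r)}$ is the point corresponding to the disc $D(a,r)=\{x:|x-a|\le r\}$, $\zeta_G=\zeta_{D(0,1)}$. Let $\mathcal{O},\mathfrak{m},k$ be the valuation ring, maximal ideal, residue field. For a type II point $P=\gamma(\zeta_G)$, $\gamma\in\mathrm{PGL}_2(K)$, the reduction $\tilde\varphi_P$ is the reduction mod $\mathfrak{m}$ of a normalized lift (coefficients in $\mathcal{O}$, one a unit) of $\gamma^{-1}\circ\varphi\circ\gamma$, after cancelling common factors; $P$ is fixed by $\varphi$ iff $\tilde\varphi_P$ is nonconstant. $\Gamma_{\mathrm{Fix}}$ is the tree spanned by the classical fixed points; $\Gamma_{\mathrm{Fix,Repel}}$ the tree spanned by classical fixed points and type II fixed points with $\deg\tilde\varphi_P\ge2$,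 $v(P)$ the valence there. Weight $w_\varphi(P)$: for type II fixed $P$, $\deg\tilde\varphi_P-1+N(P)$, $N(P)$ the number of tangent directions at $P$ containing classical fixed points that are moved by $\varphi_*$; for a branch point of $\Gamma_{\mathrm{Fix}}$ moved by $\varphi$, $v(P)-2$; else $0$. For degree 2 exactly one point has positive weight, equal to 1. (W1): $P$ fixed with $\deg\tilde\varphi_P\ge2$. (W3): $P$ fixed, $\tilde\varphi_P$ conjugate over $k$ to $z+\tilde a$, $\tilde a\in k^\times$, and $P\in\Gamma_{\mathrm{Fix}}$. *)

(* Defs.v *)
From HB Require Import structures.
From mathcomp Require Import all_boot all_order all_algebra.
From mathcomp Require Import reals.
From Stdlib Require Import ClassicalEpsilon.

Set Implicit Arguments.
Unset Strict Implicit.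
Unset Printing Implicit Defensive.

Import Order.TTheory GRing.Theory Num.Theory.
Local Open Scope ring_scope.

(* If the predicate is not satisfied by a finite set, the value is 0.        *)
Definition ncount {T : eqType} (p : T -> Prop) : nat :=
  match excluded_middle_informative
          (exists l : seq T, uniq l /\ forall x, x \in l <-> p x) with
  | left H => size (proj1_sig (constructive_indefinite_description _ H))
  | right _ => 0%N
  end.

Record nonarch_abs (K : fieldType) (R : realType) (absK : K -> R) : Prop := {
  nabs_ge0 : forall x, 0 <= absK x;
  nabs_eq0 : forall x, absK x = 0 <-> x = 0;
  nabs_mul : forall x y, absK (x * y) = absK x * absK y;
  nabs_ultra : forall x y, absK (x + y) <= Num.max (absK x) (absK y)
}.

Definition complete_abs (K : fieldType) (R : realType) (absK : K -> R) : Prop :=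
  forall u : nat -> K,
    (forall e : R, 0 < e -> exists N : nat, forall m n : nat,
        (N <= m)%N -> (N <= n)%N -> absK (u m - u n) < e) ->
    exists l : K, forall e : R, 0 < e -> exists N : nat, forall n : nat,
        (N <= n)%N -> absK (u n - l) < e.

(* red : K -> k restricted to the valuation ring O = {|x| <= 1} is a
   surjective ring morphism O -> k whose kernel is m = {|x| < 1};
   i.e. k is (a copy of) the residue field O/m and red the reduction map.
   Values of red outside O are irrelevant (never used). *)
Record residue_map (K : fieldType) (R : realType) (absK : K -> R)
    (k : fieldType) (red : K -> k) : Prop := {
  red_add : forall x y, absK x <= 1 -> absK y <= 1 -> red (x + y) = red x + red y;
  red_mul : forall x y, absK x <= 1 -> absK y <= 1 -> red (x * y) = red x * red y;
  red_one : red 1 = 1;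
  red_eq0 : forall x, absK x <= 1 -> (red x = 0 <-> absK x < 1);
  red_surj : forall t : k, exists x, absK x <= 1 /\ red x = t
}.

Section Weights.
Variables (K : fieldType) (R : realType) (absK : K -> R)
          (k : fieldType) (red : K -> k).
(* The rational map phi = F / G, with F, G in K[z] coprime. *)
Variables (F G : {poly K}).

(* Type II points: (a, b) with b != 0 represents zeta_{D(a,|b|)} = gamma(zeta_G)
   for gamma(z) = a + b z.  Two pairs represent the same point iff the discs agree. *)
Definition same_point (P Q : K * K) : Prop :=
  absK P.2 = absK Q.2 /\ absK (P.1 - Q.1) <= absK P.2.

(* gamma^{-1} o phi o gamma, gamma(z) = a + b z, as the pair (numerator, denominator). *)
Definition conj_num (a b : K) : {poly K} :=
  F \Po (a%:P + b *: 'X) - a *: (G \Po (a%:P + b *: 'X)).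
Definition conj_den (a b : K) : {poly K} := b *: (G \Po (a%:P + b *: 'X)).

Definition maxcoef (l : seq K) : K :=
  foldr (fun x m => if absK m < absK x then x else m) 0 l.

Definition norm_const (a b : K) : K :=
  maxcoef (polyseq (conj_num a b) ++ polyseq (conj_den a b)).

Definition redF0 (a b : K) : {poly k} :=
  map_poly red ((norm_const a b)^-1 *: conj_num a b).
Definition redG0 (a b : K) : {poly k} :=
  map_poly red ((norm_const a b)^-1 *: conj_den a b).

Definition redF (a b : K) : {poly k} := redF0 a b %/ gcdp (redF0 a b) (redG0 a b).
Definition redG (a b : K) : {poly k} := redG0 a b %/ gcdp (redF0 a b) (redG0 a b).

Definition red_deg (a b : K) : nat := (maxn (size (redF a b)) (size (redG a b))).-1.

(* tilde(phi)_P acting on P^1(k) = option k (None = infinity). *)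
Definition red_map (a b : K) (t : option k) : option k :=
  let f := redF a b in let g := redG a b in
  match t with
  | Some z => if g.[z] != 0 then Some (f.[z] / g.[z]) else None
  | None => if (size g < size f)%N then None
            else if size f == size g then Some (lead_coef f / lead_coef g)
            else Some 0
  end.

Definition classical_fixed (x : option K) : Prop :=
  match x with
  | Some z => F.[z] = z * G.[z]
  | None => (size G < size F)%N
  end.

(* tangent direction at P = zeta_{D(a,|b|)} (labelled by P^1(k)) containing a
   classical point *)
Definition dir_classical (a b : K) (x : option K) : option k :=
  match x with
  | Some z => if absK (z - a) <= absK b then Some (red ((z - a) / b)) else None
  | None => None
  end.

(* tangent direction at P = (a,b) containing the type II point Q = (c,d) != P *)
Definition dir_typeII (a b c d : K) : option k :=
  if (absK (c - a) <= absK b) && (absK d < absK b) then Some (red ((c - a) / b))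
  else None.

Definition is_fixedII (a b : K) : Prop := (1 <= red_deg a b)%N.

Definition N_moved (a b : K) : nat :=
  ncount (fun v : option k =>
    (exists x, classical_fixed x /\ dir_classical a b x = v) /\ red_map a b v <> v).

(* valence of a type II point in Gamma_Fix (>= 2 iff P lies in Gamma_Fix) *)
Definition val_Fix (a b : K) : nat :=
  ncount (fun v : option k => exists x, classical_fixed x /\ dir_classical a b x = v).

Definition val_FixRepel (a b : K) : nat :=
  ncount (fun v : option k =>
    (exists x, classical_fixed x /\ dir_classical a b x = v) \/
    (exists c d, d != 0 /\ (2 <= red_deg c d)%N /\ ~ same_point (c, d) (a, b)
                 /\ dir_typeII a b c d = v)).

Definition weight (a b : K) : nat :=
  if (1 <= red_deg a b)%N then (red_deg a b - 1 + N_moved a b)%N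
  else if (3 <= val_Fix a b)%N then (val_FixRepel a b - 2)%N
  else 0%N.

Definition W1 (a b : K) : Prop := (2 <= red_deg a b)%N.

Definition mobius (al be ga de : k) (t : option k) : option k :=
  match t with
  | Some z => if ga * z + de != 0 then Some ((al * z + be) / (ga * z + de)) else None
  | None => if ga != 0 then Some (al / ga) else None
  end.
Definition transl (c : k) (t : option k) : option k :=
  match t with Some z => Some (z + c) | None => None end.

Definition W3 (a b : K) : Prop :=
  is_fixedII a b /\
  (exists al be ga de c : k, al * de - be * ga != 0 /\ c != 0 /\
     forall t, red_map a b (mobius al be ga de t) = mobius al be ga de (transl c t)) /\
  (2 <= val_Fix a b)%N.

End Weights.

(* Main.v *)
Require Import Defs.
From HB Require Import structures.
From mathcomp Require Import all_boot all_order all_algebra.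
From mathcomp Require Import reals.
From mathcomp Require Import ring lra.
From Stdlib Require Import ClassicalEpsilon.
Import Order.TTheory GRing.Theory Num.Theory.
Local Open Scope ring_scope.

Set Implicit Arguments.
Unset Strict Implicit.
Unset Printing Implicit Defensive.

Section RawMap.
Variable k : fieldType.

Definition rdeg (f g : {poly k}) : nat := (maxn (size f) (size g)).-1.
Definition rmap (f g : {poly k}) (t : option k) : option k :=
  match t with
  | Some z => if g.[z] != 0 then Some (f.[z] / g.[z]) else None
  | None => if (size g < size f)%N then None
            else if size f == size g then Some (lead_coef f / lead_coef g)
            else Some 0
  end.

Lemma rdegZ v f g : v != 0 -> rdeg (v *: f) (v *: g) = rdeg f g.
Proof. by move=> hv; rewrite /rdeg !size_scale. Qed.

Lemma rmapZ v f g t : v != 0 -> rmap (v *: f) (v *: g) t = rmap f g t.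
Proof.
move=> hv; case: t => [z|] /=.
  rewrite !hornerZ mulf_eq0 (negbTE hv) /=.
  case: ifP => // _; congr Some; rewrite invfM mulrACA divff // mul1r //.
rewrite !size_scale // !lead_coefZ.
case: ifP => // _; case: ifP => // _; congr Some.
by rewrite invfM mulrACA divff // mul1r.
Qed.

Lemma cancel_gcd (f g h f' g' : {poly k}) :
  h != 0 -> coprimep f' g' -> f = h * f' -> g = h * g' ->
  exists v, v != 0 /\ f %/ gcdp f g = v *: f' /\ g %/ gcdp f g = v *: g'.
Proof.
move=> hh hc -> ->.
have e1 : gcdp (h * f') (h * g') %= h.
  apply: eqp_trans (gcdp_mul2l _ _ _) _.
  rewrite -{2}(mulr1 h); apply: eqp_mull.
  by rewrite gcdp_eqp1.
case/eqpP: e1 => [[c1 c2]] /= /andP [hc1 hc2] e.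
have -> : gcdp (h * f') (h * g') = (c2 / c1) *: h.
  by rewrite [c2 / c1]mulrC -scalerA -e scalerA mulVf // scale1r.
have hw : c2 / c1 != 0 by rewrite mulf_neq0 // invr_eq0.
exists (c2 / c1)^-1; split; first by rewrite invr_eq0.
by rewrite !divpZr // !mulKp.
Qed.

End RawMap.

Lemma ncount_eq (T : eqType) (p : T -> Prop) (l : seq T) :
  uniq l -> (forall x, x \in l <-> p x) -> ncount p = size l.
Proof.
move=> ul hl; rewrite /ncount.
case: excluded_middle_informative => [H|H]; last first.
  by exfalso; apply: H; exists l.
case: (constructive_indefinite_description _ H) => l' [u' h'] /=.
apply: perm_size; apply: uniq_perm => // x.
by apply/idP/idP => [/h' /hl|/hl /h'].
Qed.

Lemma ncount_le (T : eqType) (p : T -> Prop) (l : seq T) :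
  (forall x, p x -> x \in l) -> (ncount p <= size l)%N.
Proof.
move=> hl; rewrite /ncount.
case: excluded_middle_informative => [H|H] //.
case: (constructive_indefinite_description _ H) => l' [u' h'] /=.
by apply: uniq_leq_size => // x /h' /hl.
Qed.

Section Abs.
Variables (K : fieldType) (R : realType) (absK : K -> R).
Hypothesis HA : nonarch_abs absK.

Lemma ab_ge0 x : 0 <= absK x. Proof. exact: (nabs_ge0 HA x). Qed.
Lemma ab0 : absK 0 = 0. Proof. by apply/(nabs_eq0 HA). Qed.
Lemma ab_eq0 x : (absK x == 0) = (x == 0).
Proof. by apply/eqP/eqP => /(nabs_eq0 HA). Qed.
Lemma abM x y : absK (x * y) = absK x * absK y. Proof. exact: (nabs_mul HA x y). Qed.
Lemma ab_gt0 x : x != 0 -> 0 < absK x.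
Proof. by move=> hx; rewrite lt_def ab_eq0 hx ab_ge0. Qed.
Lemma ab1 : absK 1 = 1.
Proof.
have h : absK 1 = absK 1 * absK 1 by rewrite -abM mulr1.
have h0 : absK 1 != 0 by rewrite ab_eq0 oner_eq0.
by apply: (mulfI h0); rewrite mulr1 -h.
Qed.
Lemma abN1 : absK (-1) = 1.
Proof.
have h : absK (-1) * absK (-1) = 1 by rewrite -abM mulrNN mulr1 ab1.
have h0 := ab_ge0 (-1).
have : (absK (-1) - 1) * (absK (-1) + 1) == 0.
  by apply/eqP; rewrite mulrDr !mulrBl h; ring.
rewrite mulf_eq0 => /orP [|]; first by rewrite subr_eq0 => /eqP.
move=> /eqP e; exfalso; have : 0 < absK (-1) + 1 by apply: ltr_wpDl.
by rewrite e ltxx.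
Qed.
Lemma abN x : absK (- x) = absK x.
Proof. by rewrite -mulN1r abM abN1 mul1r. Qed.
Lemma abV x : absK (x^-1) = (absK x)^-1.
Proof.
have [->|hx] := eqVneq x 0; first by rewrite invr0 ab0 invr0.
have h : absK x * absK x^-1 = 1 by rewrite -abM mulfV // ab1.
have h0 : absK x != 0 by rewrite ab_eq0.
by rewrite -[absK x^-1]mul1r -(mulVf h0) -mulrA h mulr1.
Qed.
Lemma abDiv x y : absK (x / y) = absK x / absK y.
Proof. by rewrite abM abV. Qed.
Lemma abB x y : absK (x - y) = absK (y - x).
Proof. by rewrite -abN opprB. Qed.
Lemma abD_le x y r : absK x <= r -> absK y <= r -> absK (x + y) <= r.
Proof.
move=> hx hy; apply: le_trans (nabs_ultra HA x y) _.
by rewrite ge_max hx hy.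
Qed.
Lemma abD_lt x y r : absK x < r -> absK y < r -> absK (x + y) < r.
Proof.
move=> hx hy; apply: le_lt_trans (nabs_ultra HA x y) _.
by rewrite gt_max hx hy.
Qed.
Lemma abD_eq x y : absK x < absK y -> absK (x + y) = absK y.
Proof.
move=> hxy; apply/eqP; rewrite eq_le; apply/andP; split.
  by apply: abD_le => //; apply: ltW.
rewrite leNgt; apply/negP => h.
have : absK ((x + y) + (- x)) < absK y by apply: abD_lt => //; rewrite abN.
by rewrite addrC addKr ltxx.
Qed.
Lemma abD_eq' x y : absK y < absK x -> absK (x + y) = absK x.
Proof. by rewrite addrC; apply: abD_eq. Qed.

End Abs.

Section Maxcoef.
Variables (K : fieldType) (R : realType) (absK : K -> R).
Hypothesis HA : nonarch_abs absK.

Lemma maxcoef_ge (l : seq K) x : x \in l -> absK x <= absK (maxcoef absK l).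
Proof.
elim: l => //= y l IH; rewrite inE => /orP [/eqP ->|hx].
  case: ifP => // /negbT; by rewrite -leNgt.
case: ifP => h; last exact: IH.
by apply: le_trans (IH hx) _; apply: ltW.
Qed.

Lemma maxcoef_in (l : seq K) : maxcoef absK l = 0 \/ maxcoef absK l \in l.
Proof.
elim: l => /=; first by left.
move=> y l [IH|IH]; case: ifP => _; rewrite ?inE ?eqxx ?IH ?orbT; by [left|right].
Qed.

End Maxcoef.

Section Quad.
Variable k : fieldType.
Definition quad (c0 c1 c2 : k) : {poly k} := c0%:P + c1 *: 'X + c2 *: 'X^2.
Definition lin (c0 c1 : k) : {poly k} := c0%:P + c1 *: 'X.

Lemma quadE c0 c1 c2 : quad c0 c1 c2 = Poly [:: c0; c1; c2].
Proof.
apply/polyP => i; rewrite coef_Poly /quad !coefD coefC !coefZ coefX coefXn.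
by case: i => [|[|[|i]]] /=; rewrite ?mulr0 ?mulr1 ?addr0 ?add0r //; case: i.
Qed.
Lemma linE c0 c1 : lin c0 c1 = Poly [:: c0; c1].
Proof.
apply/polyP => i; rewrite coef_Poly /lin !coefD coefC !coefZ coefX.
by case: i => [|[|i]] /=; rewrite ?mulr0 ?mulr1 ?addr0 ?add0r //; case: i.
Qed.
Lemma quad0 c0 c1 : quad c0 c1 0 = lin c0 c1.
Proof. by rewrite /quad scale0r addr0. Qed.
Lemma lin0 c0 : lin c0 0 = c0%:P.
Proof. by rewrite /lin scale0r addr0. Qed.
Lemma size_quad c0 c1 c2 : c2 != 0 -> size (quad c0 c1 c2) = 3%N.
Proof. by move=> h; rewrite quadE (@PolyK _ 0). Qed.
Lemma size_lin c0 c1 : c1 != 0 -> size (lin c0 c1) = 2%N.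
Proof. by move=> h; rewrite linE (@PolyK _ 0). Qed.
Lemma size_lin_le c0 c1 : (size (lin c0 c1) <= 2)%N.
Proof. rewrite linE; apply: leq_trans (size_Poly _) _; done. Qed.
Lemma lead_lin c0 c1 : c1 != 0 -> lead_coef (lin c0 c1) = c1.
Proof. by move=> h; rewrite /lead_coef size_lin // linE coef_Poly. Qed.
Lemma horner_quad c0 c1 c2 x : (quad c0 c1 c2).[x] = c0 + c1 * x + c2 * x ^+ 2.
Proof. by rewrite /quad !hornerE. Qed.
Lemma horner_lin c0 c1 x : (lin c0 c1).[x] = c0 + c1 * x.
Proof. by rewrite /lin !hornerE. Qed.
End Quad.

Section Quad2.
Variable k : fieldType.

Lemma lin_root (c0 c1 t : k) : c0 + c1 * t = 0 -> lin c0 c1 = c1 *: ('X - t%:P).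
Proof.
move=> h; have -> : c0 = - (c1 * t) by apply/eqP; rewrite -addr_eq0 h.
rewrite /lin -!mul_polyC rmorphN rmorphM /=; ring.
Qed.

Lemma quad_root (c0 c1 c2 t : k) : c0 + c1 * t + c2 * t ^+ 2 = 0 ->
  quad c0 c1 c2 = ('X - t%:P) * lin (c1 + c2 * t) c2.
Proof.
move=> h; have -> : c0 = - (c1 * t + c2 * t ^+ 2) by apply/eqP; rewrite -addr_eq0 addrA h.
rewrite /quad /lin -!mul_polyC !rmorphN !rmorphD !rmorphM /= ?rmorphXn /=; ring.
Qed.

Lemma coprime_lin_root (f : {poly k}) (c0 c1 t : k) : c1 != 0 -> c0 + c1 * t = 0 ->
  ~~ root f t -> coprimep f (lin c0 c1).
Proof. by move=> h1 h ht; rewrite (lin_root h) coprimepZr // coprimep_XsubC. Qed.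

Lemma coprime_const (f : {poly k}) c : c != 0 -> coprimep f c%:P.
Proof.
by move=> hc; rewrite -[c%:P]mulr1 mul_polyC coprimepZr // coprimep1.
Qed.

Lemma rmap_transl (q c : k) : c != 0 -> forall t, rmap (lin q c) c%:P t = transl (q / c) t.
Proof.
move=> hc [z|] /=.
  rewrite hornerC hc horner_lin; congr Some; field; exact: hc.
by rewrite size_polyC hc size_lin.
Qed.

Lemma rdeg_transl (q c : k) : c != 0 -> rdeg (lin q c) c%:P = 1%N.
Proof. by move=> hc; rewrite /rdeg size_polyC hc size_lin. Qed.

End Quad2.

Section Red.
Variables (K : fieldType) (R : realType) (absK : K -> R) (k : fieldType) (red : K -> k).
Hypotheses (HA : nonarch_abs absK) (HR : residue_map absK red).

Lemma red0 : red 0 = 0.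
Proof. by apply/(red_eq0 HR); rewrite (ab0 HA) // ltr01. Qed.
Lemma red_small x : absK x < 1 -> red x = 0.
Proof. move=> h; have h' : absK x <= 1 by apply: ltW. exact: (proj2 (red_eq0 HR h') h). Qed.
Lemma red_unit x : absK x = 1 -> red x != 0.
Proof.
move=> h; apply/eqP => e; have hx : absK x <= 1 by rewrite h.
by have := proj1 (red_eq0 HR hx) e; rewrite h ltxx.
Qed.
Lemma red_eq0' x : absK x <= 1 -> red x = 0 -> absK x < 1.
Proof. by move=> h e; apply: (proj1 (red_eq0 HR h) e). Qed.
Lemma intM x y : absK x <= 1 -> absK y <= 1 -> absK (x * y) <= 1.
Proof.
move=> hx hy; rewrite (abM HA); rewrite -[1](mulr1 1).
by apply: ler_pM => //; apply: ab_ge0.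
Qed.
Lemma intD x y : absK x <= 1 -> absK y <= 1 -> absK (x + y) <= 1.
Proof. exact: abD_le. Qed.
Lemma redN x : absK x <= 1 -> red (- x) = - red x.
Proof.
move=> hx; have hn : absK (- x) <= 1 by rewrite (abN HA).
apply/eqP; rewrite -addr_eq0 -(red_add HR) // addrC subrr; apply/eqP; exact: red0.
Qed.
Lemma red_quad u0 u1 u2 x : absK u0 <= 1 -> absK u1 <= 1 -> absK u2 <= 1 ->
  absK x <= 1 ->
  red (u0 + u1 * x + u2 * x ^+ 2) = red u0 + red u1 * red x + red u2 * red x ^+ 2.
Proof.
move=> h0 h1 h2 hx; have hx2 : absK (x ^+ 2) <= 1 by rewrite expr2 intM.
by rewrite !(red_add HR) ?intD ?intM // !(red_mul HR) ?intM //.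
Qed.
Lemma red_lin u0 u1 x : absK u0 <= 1 -> absK u1 <= 1 -> absK x <= 1 ->
  red (u0 + u1 * x) = red u0 + red u1 * red x.
Proof. by move=> h0 h1 hx; rewrite (red_add HR) ?intM // (red_mul HR). Qed.

Lemma map_quad v c0 c1 c2 :
  map_poly red (v *: quad c0 c1 c2) = quad (red (v * c0)) (red (v * c1)) (red (v * c2)).
Proof.
apply/polyP => i; rewrite coef_map_id0 ?red0 // coefZ !quadE !coef_Poly.
by case: i => [|[|[|i]]] //=; rewrite ?nth_nil mulr0 red0.
Qed.
Lemma map_lin v c0 c1 :
  map_poly red (v *: lin c0 c1) = lin (red (v * c0)) (red (v * c1)).
Proof.
apply/polyP => i; rewrite coef_map_id0 ?red0 // coefZ !linE !coef_Poly.
by case: i => [|[|i]] //=; rewrite ?nth_nil mulr0 red0.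
Qed.
End Red.

Section Main.
Variables (K : fieldType) (R : realType) (absK : K -> R) (k : fieldType) (red : K -> k) (s : K).
Hypotheses (HA : nonarch_abs absK) (HR : residue_map absK red).
Local Notation F := ('X^2 + s *: 'X + 1 : {poly K}).
Local Notation G := ('X : {poly K}).

Lemma numE a b : conj_num F G a b = quad (1 + s * a) (b * (a + s)) (b ^+ 2).
Proof.
rewrite /conj_num /quad !comp_polyD comp_Xn_poly comp_polyZ comp_polyX -polyC1 comp_polyC.
rewrite -!mul_polyC !rmorphD !rmorphM /= ?rmorphXn /=; ring.
Qed.
Lemma denE a b : conj_den G a b = lin (a * b) (b ^+ 2).
Proof.
rewrite /conj_den /lin comp_polyX.
rewrite -!mul_polyC ?rmorphD ?rmorphM /= ?rmorphXn /=; ring.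
Qed.

Definition cc a b := norm_const absK F G a b.

Lemma cc_ge a b (p : {poly K}) i :
  (p = conj_num F G a b \/ p = conj_den G a b) -> absK p`_i <= absK (cc a b).
Proof.
move=> hp; case: (ltnP i (size p)) => hi; last first.
  by rewrite nth_default // (ab0 HA) ab_ge0.
apply: (maxcoef_ge); rewrite mem_cat; apply/orP.
by case: hp => <-; [left|right]; apply: mem_nth.
Qed.

Lemma cc_bounds a b :
  [/\ absK (1 + s * a) <= absK (cc a b), absK (b * (a + s)) <= absK (cc a b),
      absK (b ^+ 2) <= absK (cc a b) & absK (a * b) <= absK (cc a b)].
Proof.
have hn i : absK (conj_num F G a b)`_i <= absK (cc a b) by apply: cc_ge; left.
have hd i : absK (conj_den G a b)`_i <= absK (cc a b) by apply: cc_ge; right.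
move: (hn 0%N) (hn 1%N) (hn 2%N) (hd 0%N).
by rewrite numE denE quadE linE !coef_Poly /=.
Qed.

Lemma cc_cases a b : b != 0 ->
  [\/ cc a b = 1 + s * a, cc a b = b * (a + s), cc a b = b ^+ 2 | cc a b = a * b].
Proof.
move=> hb; have hb2 : b ^+ 2 != 0 by rewrite expf_neq0.
have pn : polyseq (conj_num F G a b) = [:: 1 + s * a; b * (a + s); b ^+ 2].
  by rewrite numE quadE (@PolyK _ 0).
have pd : polyseq (conj_den G a b) = [:: a * b; b ^+ 2].
  by rewrite denE linE (@PolyK _ 0).
have hc : cc a b != 0.
  rewrite -(ab_eq0 HA); apply/negP => /eqP h.
  case: (cc_bounds a b) => _ _ h2 _; move: h2; rewrite h => h2.
  by have := lt_le_trans (ab_gt0 HA hb2) h2; rewrite ltxx.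
case: (maxcoef_in absK (polyseq (conj_num F G a b) ++ polyseq (conj_den G a b))).
  by move=> h; rewrite /cc /norm_const h eqxx in hc.
rewrite -/(norm_const absK F G a b) -/(cc a b) pn pd /= !inE.
move=> /orP [/eqP ->|/orP [/eqP ->|/orP [/eqP ->|/orP [/eqP ->|/eqP ->]]]];
  by [constructor 1|constructor 2|constructor 3|constructor 4].
Qed.

Definition fc0 a b := red ((cc a b)^-1 * (1 + s * a)).
Definition fc1 a b := red ((cc a b)^-1 * (b * (a + s))).
Definition fc2 a b := red ((cc a b)^-1 * b ^+ 2).
Definition gc0 a b := red ((cc a b)^-1 * (a * b)).

Lemma redF0E a b : redF0 absK red F G a b = quad (fc0 a b) (fc1 a b) (fc2 a b).
Proof. by rewrite /redF0 numE (map_quad HA HR). Qed.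
Lemma redG0E a b : redG0 absK red F G a b = lin (gc0 a b) (fc2 a b).
Proof. by rewrite /redG0 denE (map_lin HA HR). Qed.

Lemma cc_neq0 a b : b != 0 -> cc a b != 0.
Proof.
move=> hb; have hb2 : b ^+ 2 != 0 by rewrite expf_neq0.
case: (cc_bounds a b) => _ _ h _; rewrite -(ab_eq0 HA).
by apply/negP => /eqP e; move: h; rewrite e => h; have := lt_le_trans (ab_gt0 HA hb2) h; rewrite ltxx.
Qed.

Lemma int_div a b x : b != 0 -> absK x <= absK (cc a b) -> absK ((cc a b)^-1 * x) <= 1.
Proof.
move=> hb hx; have hc := ab_gt0 HA (cc_neq0 a hb).
by rewrite (abM HA) (abV HA) mulrC ler_pdivrMr // mul1r.
Qed.

Lemma evalF a b x : b != 0 -> absK x <= 1 ->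
  (quad (fc0 a b) (fc1 a b) (fc2 a b)).[red x] =
  red ((cc a b)^-1 * (b ^+ 2 * x ^+ 2 + b * (a + s) * x + (1 + s * a))).
Proof.
move=> hb hx; case: (cc_bounds a b) => h0 h1 h2 h3.
rewrite horner_quad /fc0 /fc1 /fc2 -(red_quad HA HR) ?int_div //.
congr red; ring.
Qed.

Lemma evalG a b x : b != 0 -> absK x <= 1 ->
  (lin (gc0 a b) (fc2 a b)).[red x] = red ((cc a b)^-1 * (b ^+ 2 * x + a * b)).
Proof.
move=> hb hx; case: (cc_bounds a b) => h0 h1 h2 h3.
rewrite horner_lin /gc0 /fc2 -(red_lin HA HR) ?int_div //.
congr red; ring.
Qed.

Lemma int_quot a b z : b != 0 -> absK (z - a) <= absK b -> absK ((z - a) / b) <= 1.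
Proof.
move=> hb h; have hb' := ab_gt0 HA hb.
by rewrite (abDiv HA) ler_pdivrMr // mul1r.
Qed.

Lemma FD a b z : b != 0 -> s * z + 1 = 0 -> absK (z - a) <= absK b ->
  (quad (fc0 a b) (fc1 a b) (fc2 a b)).[red ((z - a) / b)] =
  red ((z - a) / b) * (lin (gc0 a b) (fc2 a b)).[red ((z - a) / b)].
Proof.
move=> hb hz hza; set x := (z - a) / b.
have hx : absK x <= 1 by apply: int_quot.
have hc := cc_neq0 a hb.
case: (cc_bounds a b) => h0 h1 h2 h3.
have hw : absK (b ^+ 2 * x + a * b) <= absK (cc a b).
  apply: abD_le => //; rewrite (abM HA); apply: le_trans h2.
  by rewrite -[X in _ <= X]mulr1 ler_wpM2l ?ab_ge0.
rewrite evalF // evalG // -(red_mul HR) ?int_div //.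
congr red; apply/eqP; rewrite -subr_eq0.
have -> : (cc a b)^-1 * (b ^+ 2 * x ^+ 2 + b * (a + s) * x + (1 + s * a)) -
   x * ((cc a b)^-1 * (b ^+ 2 * x + a * b)) = (cc a b)^-1 * (s * z + 1).
  by rewrite /x; field; rewrite hc hb.
by rewrite hz mulr0.
Qed.

Lemma sizeF : size F = 3%N.
Proof.
have -> : F = quad 1 s 1.
  rewrite /quad -!mul_polyC polyC1; ring.
by rewrite size_quad ?oner_eq0.
Qed.

Lemma fixedP x : classical_fixed F G x <-> x = None \/ exists z, x = Some z /\ s * z + 1 = 0.
Proof.
case: x => [z|] /=; last by rewrite sizeF size_polyX; split => // _; left.
rewrite !hornerE; split.
  move=> h; right; exists z; split => //.
  have e : s * z + 1 = (z ^+ 2 + s * z + 1) - z * z by ring.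
  by rewrite e h subrr.
case => // -[_ [[<-] h]].
have e : z ^+ 2 + s * z + 1 = z * z + (s * z + 1) by ring.
by rewrite e h addr0.
Qed.

Lemma fixed_unique z z' : s * z + 1 = 0 -> s * z' + 1 = 0 -> z = z'.
Proof.
move=> h h'; have hs : s != 0 by apply/eqP => e; move: h; rewrite e mul0r add0r => /eqP; rewrite oner_eq0.
by apply: (mulfI hs); apply: (addIr 1); rewrite h h'.
Qed.

Lemma valFix_le a b : (val_Fix absK red F G a b <= 2)%N.
Proof.
rewrite /val_Fix.
apply: (ncount_le (l := [:: None; Some (red ((- s^-1 - a) / b))])) => v [x [/fixedP hx <-]].
case: hx => [->|[z [-> hz]]] /=; rewrite !inE ?eqxx //.
have hs : s != 0 by apply/eqP => e; move: hz; rewrite e mul0r add0r => /eqP; rewrite oner_eq0.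
have -> : z = - s^-1.
  apply: fixed_unique => //; rewrite mulrN mulfV //; exact: addNr.
by case: ifP => _; rewrite ?eqxx ?orbT.
Qed.

Lemma weight_E a b :
  weight absK red F G a b =
  if (1 <= red_deg absK red F G a b)%N then
    (red_deg absK red F G a b - 1 + N_moved absK red F G a b)%N else 0%N.
Proof.
rewrite /weight; case: ifP => // _.
by rewrite ltnNge (leq_trans (valFix_le a b)).
Qed.

Lemma N0 a b : red_map absK red F G a b None = None ->
  (forall z, s * z + 1 = 0 -> absK (z - a) <= absK b ->
     red_map absK red F G a b (Some (red ((z - a) / b))) = Some (red ((z - a) / b))) ->
  N_moved absK red F G a b = 0%N.
Proof.
move=> hN hS; rewrite /N_moved; apply: (ncount_eq (l := [::])) => // v.
split => //= -[[x [/fixedP hx hd]] hm].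
case: hx => [hx|[z [hx hz]]]; subst x; move: hd => /=.
  by move=> hv; subst v.
case: ifP => hza hv; subst v; first by case: hm; apply: hS.
by case: hm.
Qed.

Lemma N1 a b z0 : red_map absK red F G a b None = None ->
  s * z0 + 1 = 0 -> absK (z0 - a) <= absK b ->
  red_map absK red F G a b (Some (red ((z0 - a) / b))) <> Some (red ((z0 - a) / b)) ->
  N_moved absK red F G a b = 1%N.
Proof.
move=> hN hz0 hza hm; rewrite /N_moved.
apply: (ncount_eq (l := [:: Some (red ((z0 - a) / b))])) => // v.
rewrite inE; split.
  move/eqP => ->; split => //; exists (Some z0); split; last by rewrite /= hza.
  by apply/fixedP; right; exists z0.
move=> [[x [/fixedP hx hd]] hm'].
case: hx => [hx|[z [hx hz]]]; subst x; move: hd => /=.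
  by move=> hv; subst v.
have <- := fixed_unique hz0 hz.
case: ifP => _ hv; subst v => //.
Qed.

Lemma factor_case a b (h f' g' : {poly k}) : h != 0 -> coprimep f' g' ->
  redF0 absK red F G a b = h * f' -> redG0 absK red F G a b = h * g' ->
  red_deg absK red F G a b = rdeg f' g' /\
  forall t, red_map absK red F G a b t = rmap f' g' t.
Proof.
move=> hh hc hf hg; have [v [hv [e1 e2]]] := cancel_gcd hh hc hf hg.
have E1 : redF absK red F G a b = v *: f' by rewrite /redF e1.
have E2 : redG absK red F G a b = v *: g' by rewrite /redG e2.
split.
  change (rdeg (redF absK red F G a b) (redG absK red F G a b) = rdeg f' g').
  by rewrite E1 E2 rdegZ.
move=> t.
change (rmap (redF absK red F G a b) (redG absK red F G a b) t = rmap f' g' t).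
by rewrite E1 E2 rmapZ.
Qed.

Lemma zero_den_case a b : redG0 absK red F G a b = 0 -> red_deg absK red F G a b = 0%N.
Proof.
move=> hg.
change ((maxn (size (redF0 absK red F G a b %/ gcdp (redF0 absK red F G a b) (redG0 absK red F G a b)))
   (size (redG0 absK red F G a b %/ gcdp (redF0 absK red F G a b) (redG0 absK red F G a b)))).-1 = 0%N).
rewrite hg gcdp0 div0p size_poly0 maxn0.
have [->|hf] := eqVneq (redF0 absK red F G a b) 0; first by rewrite div0p size_poly0.
by rewrite divpp // size_polyC (@oner_neq0 k).
Qed.

Lemma C1_facts a b : b != 0 -> absK (cc a b) = absK (b ^+ 2) ->
  [/\ absK a <= absK b, absK s <= absK b & 1 <= absK b].
Proof.
move=> hb hc; have hb' := ab_gt0 HA hb.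
case: (cc_bounds a b) => h0 h1 h2 h3.
have eb : absK (b ^+ 2) = absK b * absK b by rewrite expr2 (abM HA).
rewrite hc eb in h0 h1 h3.
have ha : absK a <= absK b by rewrite -(ler_pM2r hb') -(abM HA).
have has : absK (a + s) <= absK b by rewrite -(ler_pM2l hb') -(abM HA).
have hs : absK s <= absK b.
  have -> : s = (a + s) + (- a) by ring.
  by apply: abD_le => //; rewrite (abN HA).
split => //; rewrite leNgt; apply/negP => hlt.
have hsa : absK (s * a) < 1.
  have ha1 : absK a <= 1 by apply: le_trans ha (ltW hlt).
  rewrite (abM HA); apply: (le_lt_trans _ hlt); apply: le_trans hs.
  by rewrite -[X in _ <= X]mulr1; apply: ler_wpM2l => //; apply: ab_ge0.
have e1 : absK (1 + s * a) = 1.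
  by rewrite (abD_eq' HA) (ab1 HA) //; rewrite (ab1 HA).
rewrite e1 in h0.
have : absK b * absK b < 1.
  apply: (le_lt_trans _ hlt); rewrite -[X in _ <= X]mulr1.
  by apply: ler_wpM2l; [apply: ab_ge0 | exact: ltW hlt].
by rewrite ltNge h0.
Qed.

Lemma C1_eval a b : b != 0 -> absK (cc a b) = absK (b ^+ 2) ->
  [/\ fc2 a b != 0, gc0 a b + fc2 a b * red (- (a / b)) = 0 &
      fc0 a b + fc1 a b * red (- (a / b)) + fc2 a b * red (- (a / b)) ^+ 2 = red ((cc a b)^-1)].
Proof.
move=> hb hc; have [ha hs h1] := C1_facts hb hc.
have hb' := ab_gt0 HA hb.
have hcn := cc_neq0 a hb.
have hx : absK (- (a / b)) <= 1 by rewrite (abN HA) (abDiv HA) ler_pdivrMr // mul1r.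
split.
- rewrite /fc2; apply: (red_unit HR); rewrite (abM HA) (abV HA) hc mulVf //.
  by rewrite (ab_eq0 HA) expf_neq0.
- rewrite -horner_lin evalG //.
  have -> : b ^+ 2 * - (a / b) + a * b = 0 by field.
  by rewrite mulr0 (red0 HA HR).
- rewrite -horner_quad evalF //; congr red; field; by rewrite hcn hb.
Qed.

Lemma C1a a b : b != 0 -> absK (cc a b) = absK (b ^+ 2) -> absK b = 1 ->
  red_deg absK red F G a b = 2%N /\ weight absK red F G a b = 1%N.
Proof.
move=> hb hc hb1.
have [ha hs _] := C1_facts hb hc.
have [h2 hg hf] := C1_eval hb hc.
have hc1 : absK (cc a b) = 1 by rewrite hc expr2 (abM HA) hb1 mulr1.
have hcop : coprimep (quad (fc0 a b) (fc1 a b) (fc2 a b)) (lin (gc0 a b) (fc2 a b)).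
  apply: (coprime_lin_root h2 hg); rewrite /root horner_quad hf.
  by apply: (red_unit HR); rewrite (abV HA) hc1 invr1.
have e1 : redF0 absK red F G a b = 1 * quad (fc0 a b) (fc1 a b) (fc2 a b).
  by rewrite redF0E mul1r.
have e2 : redG0 absK red F G a b = 1 * lin (gc0 a b) (fc2 a b).
  by rewrite redG0E mul1r.
have [hd hm] := factor_case (oner_neq0 _) hcop e1 e2.
have hd2 : red_deg absK red F G a b = 2%N by rewrite hd /rdeg size_quad // size_lin.
split => //.
rewrite weight_E hd2 /=.
suff -> : N_moved absK red F G a b = 0%N by [].
apply: N0; first by rewrite hm /= size_quad // size_lin.
move=> z hz hza; rewrite hm /=.
have hx := int_quot hb hza.
have hgu : (lin (gc0 a b) (fc2 a b)).[red ((z - a) / b)] != 0.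
  rewrite evalG //; apply: (red_unit HR).
  have -> : b ^+ 2 * ((z - a) / b) + a * b = b * z by field.
  rewrite (abM HA) (abV HA) hc1 invr1 mul1r (abM HA) hb1 mul1r.
  have hz1 : absK z <= 1.
    have -> : z = (z - a) + a by ring.
    by apply: abD_le; rewrite -?hb1.
  have hsz : absK s * absK z = 1.
    by rewrite -(abM HA) (_ : s * z = - 1) ?(abN HA) ?(ab1 HA) //; apply/eqP; rewrite -addr_eq0 hz.
  apply/eqP; rewrite eq_le hz1 /= -hsz.
  by rewrite -[X in _ <= X]mul1r; apply: ler_wpM2r; [apply: ab_ge0 | rewrite -hb1].
by rewrite (negbTE hgu) FD // mulfK.
Qed.

Lemma C1b a b : b != 0 -> absK (cc a b) = absK (b ^+ 2) -> 1 < absK b ->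
  exists e, [/\ red_deg absK red F G a b = 1%N,
    (forall t, red_map absK red F G a b t = transl e t),
    (e != 0 <-> absK s = absK b) &
    (weight absK red F G a b = 1%N <-> absK s = absK b)].
Proof.
move=> hb hc hb1.
have [ha hs _] := C1_facts hb hc.
have [h2 hg hf] := C1_eval hb hc.
have hb' := ab_gt0 HA hb.
have hcn := cc_neq0 a hb.
have hbb : absK (cc a b) = absK b * absK b by rewrite hc expr2 (abM HA).
have hc1 : 1 < absK (cc a b) by rewrite hbb; nra.
have hx : absK (- (a / b)) <= 1 by rewrite (abN HA) (abDiv HA) ler_pdivrMr // mul1r.
have hf0 : fc0 a b + fc1 a b * red (- (a / b)) + fc2 a b * red (- (a / b)) ^+ 2 = 0.
  rewrite hf; apply: (red_small HR).
  by rewrite (abV HA) invf_lt1 // (lt_trans ltr01).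
have hq : fc1 a b + fc2 a b * red (- (a / b)) = red ((cc a b)^-1 * (b * s)).
  case: (cc_bounds a b) => h0 h1 h2' h3.
  rewrite /fc1 /fc2 -(red_lin HA HR) ?int_div //; congr red; field; rewrite ?hb ?hcn //.
set q := fc1 a b + fc2 a b * red (- (a / b)) in hq.
have hh : 'X - (red (- (a / b)))%:P != 0 by rewrite -size_poly_eq0 size_XsubC.
have e1 : redF0 absK red F G a b = ('X - (red (- (a / b)))%:P) * lin q (fc2 a b).
  by rewrite redF0E (quad_root hf0).
have e2 : redG0 absK red F G a b = ('X - (red (- (a / b)))%:P) * (fc2 a b)%:P.
  by rewrite redG0E (lin_root hg) -mul_polyC mulrC.
have [hd hm] := factor_case hh (coprime_const _ h2) e1 e2.
have hd1 : red_deg absK red F G a b = 1%N by rewrite hd rdeg_transl.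
have hm' : forall t, red_map absK red F G a b t = transl (q / fc2 a b) t.
  by move=> t; rewrite hm rmap_transl.
have hqs : q != 0 <-> absK s = absK b.
  have hbs : absK ((cc a b)^-1 * (b * s)) = absK s / absK b.
    rewrite (abM HA) (abV HA) hbb (abM HA); field.
    by rewrite gt_eqF.
  rewrite hq; split.
    move=> hq0; have hle : absK s / absK b <= 1 by rewrite ler_pdivrMr // mul1r.
    have : ~ (absK s / absK b < 1) by move=> hl; move: hq0; rewrite (red_small HR) ?hbs // eqxx.
    move=> hn; have e : absK s / absK b = 1.
      by apply/eqP; rewrite eq_le hle /= leNgt; apply/negP.
    have hb0 : absK b != 0 by rewrite gt_eqF.
    by move: (divfK hb0 (absK s)); rewrite e mul1r => ->.
  by move=> e; apply: (red_unit HR); rewrite hbs e divff // gt_eqF.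
have hes : q / fc2 a b != 0 <-> absK s = absK b.
  by rewrite -hqs mulf_eq0 invr_eq0 (negbTE h2) orbF.
exists (q / fc2 a b); split => //.
rewrite weight_E hd1 /= subnn add0n.
have hN : red_map absK red F G a b None = None by rewrite hm'.
split.
  move=> hN1; apply/hes; apply/negP => /eqP he.
  have := N0 hN.
  rewrite hN1 => H; suff : 1%N = 0%N by [].
  by apply: H => z _ _; rewrite hm' he /= addr0.
move=> e; have hs0 : s != 0 by rewrite -(ab_eq0 HA) e gt_eqF.
have hz0 : s * (- s^-1) + 1 = 0 by rewrite mulrN mulfV // addNr.
apply: (N1 hN hz0).
  apply: (abD_le HA); last by rewrite (abN HA).
  rewrite (abN HA) (abV HA) e; apply: ltW; apply: (lt_trans _ hb1).
  by rewrite invf_lt1.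
rewrite hm' /= => -[] /eqP; rewrite addrC -subr_eq0 addrK.
by move/eqP; apply/eqP; apply/hes.
Qed.

Lemma C2 a b : b != 0 -> absK (b ^+ 2) < absK (cc a b) -> weight absK red F G a b = 0%N.
Proof.
move=> hb hlt.
have hcn := cc_neq0 a hb.
have hc' := ab_gt0 HA hcn.
have hf2 : fc2 a b = 0.
  rewrite /fc2; apply: (red_small HR).
  by rewrite (abM HA) (abV HA) mulrC ltr_pdivrMr // mul1r.
have eF : redF0 absK red F G a b = 1 * lin (fc0 a b) (fc1 a b) by rewrite redF0E hf2 quad0 mul1r.
have eG : redG0 absK red F G a b = 1 * (gc0 a b)%:P by rewrite redG0E hf2 lin0 mul1r.
rewrite weight_E.
have [hg0|hg0] := eqVneq (gc0 a b) 0.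
  by rewrite (zero_den_case (_ : redG0 absK red F G a b = 0)) // eG hg0 mulr0.
have [hd hm] := factor_case (oner_neq0 _) (coprime_const _ hg0) eF eG.
rewrite hd.
have [hf1|hf1] := eqVneq (fc1 a b) 0.
  rewrite /rdeg hf1 lin0 !size_polyC hg0.
  by case: (fc0 a b != 0).
rewrite /rdeg size_lin // size_polyC hg0 /=.
apply: N0; first by rewrite hm /= size_polyC hg0 size_lin.
move=> z hz hza; rewrite hm /= hornerC hg0.
have := FD hb hz hza; rewrite hf2 quad0 lin0 hornerC => ->.
by rewrite mulfK.
Qed.

Lemma cc_eq a b : b != 0 -> absK (1 + s * a) <= absK (b ^+ 2) ->
  absK (b * (a + s)) <= absK (b ^+ 2) -> absK (a * b) <= absK (b ^+ 2) ->
  absK (cc a b) = absK (b ^+ 2).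
Proof.
move=> hb h0 h1 h3; case: (cc_bounds a b) => _ _ h2 _.
apply/eqP; rewrite eq_le h2 andbT.
by case: (cc_cases a hb) => ->.
Qed.

Lemma mob_id (t : option k) : mobius 1 0 0 1 t = t.
Proof.
case: t => [z|] /=; last by rewrite eqxx.
by rewrite mul0r add0r oner_neq0 mul1r addr0 divr1.
Qed.

Lemma valFix_eq2 a b : b != 0 -> s != 0 -> absK (- s^-1 - a) <= absK b ->
  val_Fix absK red F G a b = 2%N.
Proof.
move=> hb hs hd.
have hz0 : s * (- s^-1) + 1 = 0 by rewrite mulrN mulfV // addNr.
rewrite /val_Fix.
apply: (ncount_eq (l := [:: None; Some (red ((- s^-1 - a) / b))])) => // v.
rewrite !inE; split.
  case/orP => /eqP ->.
    by exists None; split => //; apply/fixedP; left.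
  exists (Some (- s^-1)); split; last by rewrite /= hd.
  by apply/fixedP; right; exists (- s^-1).
move=> [x [/fixedP hx <-]].
case: hx => [->|[z [-> hz]]] /=; rewrite ?eqxx //.
have <- := fixed_unique hz0 hz.
by case: ifP => _; rewrite ?eqxx ?orbT.
Qed.

Lemma weight_class a b : b != 0 ->
  [\/ [/\ absK (cc a b) = absK (b ^+ 2), absK b = 1 & weight absK red F G a b = 1%N],
      [/\ absK (cc a b) = absK (b ^+ 2), 1 < absK b &
          (weight absK red F G a b = 1%N <-> absK s = absK b)] |
      (absK (b ^+ 2) < absK (cc a b) /\ weight absK red F G a b = 0%N)].
Proof.
move=> hb; case: (cc_bounds a b) => _ _ h2 _.
move: h2; rewrite le_eqVlt => /orP [/eqP hc|hlt]; last by constructor 3; split => //; apply: C2.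
have hc' := esym hc.
have [_ _ h1] := C1_facts hb hc'.
move: h1; rewrite le_eqVlt => /orP [/eqP h1|h1].
  by constructor 1; split; [exact: hc' | rewrite h1 | case: (C1a hb hc' (esym h1))].
constructor 2; split => //.
by have [e [_ _ _ H]] := C1b hb hc' h1.
Qed.

Lemma main_result (lambda3 : K) : s ^+ 2 = 1 - lambda3 ->
  (absK lambda3 <= 1 ->
     (forall a b : K, b != 0 ->
        (weight absK red F G a b = 1%N <-> same_point absK (a, b) (0, 1)))
     /\ W1 absK red F G 0 1)
  /\
  (1 < absK lambda3 ->
     (forall a b : K, b != 0 ->
        (weight absK red F G a b = 1%N <->
           absK b = Num.sqrt (absK lambda3) /\ absK a <= absK b))
     /\ (forall b : K, absK b = Num.sqrt (absK lambda3) -> W3 absK red F G 0 b)).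
Proof.
move=> hl.
have hs2 : absK s * absK s = absK (1 - lambda3) by rewrite -(abM HA) -expr2 hl.
have hs0 := ab_ge0 HA s.
split.
- move=> hl1.
  have hs1 : absK s <= 1.
    have : absK (1 - lambda3) <= 1 by apply: (abD_le HA); rewrite ?(ab1 HA) ?(abN HA).
    rewrite -hs2 => h; rewrite leNgt; apply/negP => h'.
    have : 1 < absK s * absK s by nra.
    by rewrite ltNge h.
  split.
  + move=> a b hb; rewrite /same_point /= subr0 (ab1 HA).
    case: (weight_class a hb) => [[hc hb1 hw]|[hc hb1 hw]|[hlt hw]].
    * rewrite hw; split => // _; split => //; by case: (C1_facts hb hc).
    * split; last by move=> [e _]; rewrite e ltxx in hb1.
      move/hw => e; rewrite e in hs1.
      by have := lt_le_trans hb1 hs1; rewrite ltxx.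
    * rewrite hw; split => // -[hb1 ha1]; exfalso.
      have hb2 : absK (b ^+ 2) = 1 by rewrite expr2 (abM HA) hb1 mulr1.
      have ha2 : absK a <= 1 by rewrite -hb1.
      have hc : absK (cc a b) = absK (b ^+ 2).
        apply: cc_eq => //; rewrite hb2.
        - apply: (abD_le HA); first by rewrite (ab1 HA).
          by rewrite (abM HA); apply: mulr_ile1 => //; apply: ab_ge0.
        - by rewrite (abM HA) hb1 mul1r; apply: (abD_le HA).
        - by rewrite (abM HA) hb1 mulr1.
      by move: hlt; rewrite hc ltxx.
  + rewrite /W1.
    have hc : absK (cc 0 1) = absK ((1 : K) ^+ 2).
      apply: cc_eq; rewrite ?oner_neq0 // expr1n (ab1 HA).
      - by rewrite mulr0 addr0 (ab1 HA).
      - by rewrite mul1r add0r.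
      - by rewrite mul0r (ab0 HA) ler01.
    by case: (C1a (oner_neq0 _) hc (ab1 HA)) => ->.
- move=> hl1.
  have hsl : absK (1 - lambda3) = absK lambda3.
    by rewrite (abD_eq HA) ?(abN HA) // (ab1 HA).
  have hs1 : 1 < absK s.
    rewrite hsl in hs2; rewrite ltNge; apply/negP => h.
    have : absK s * absK s <= 1 by apply: mulr_ile1.
    by rewrite hs2 leNgt hl1.
  have hsq : Num.sqrt (absK lambda3) = absK s.
    by rewrite -hsl -hs2 -expr2 sqrtr_sqr ger0_norm.
  rewrite hsq; split.
  + move=> a b hb; case: (weight_class a hb) => [[hc hb1 hw]|[hc hb1 hw]|[hlt hw]].
    * exfalso; case: (C1_facts hb hc) => _ h _; rewrite hb1 in h.
      by have := lt_le_trans hs1 h; rewrite ltxx.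
    * rewrite hw; split; last by case=> e _.
      by move=> e; split => //; case: (C1_facts hb hc).
    * rewrite hw; split => // -[hbs ha]; exfalso.
      have hb' : 0 < absK b by rewrite hbs (lt_trans ltr01).
      have hb2 : absK (b ^+ 2) = absK b * absK b by rewrite expr2 (abM HA).
      have hc : absK (cc a b) = absK (b ^+ 2).
        apply: cc_eq => //; rewrite hb2.
        - apply: (abD_le HA); first by rewrite (ab1 HA); nra.
          rewrite (abM HA) hbs.
          by apply: ler_wpM2l => //; rewrite -hbs.
        - rewrite (abM HA); apply: ler_wpM2l; first exact: ltW.
          by apply: (abD_le HA) => //; rewrite -hbs.
        - by rewrite (abM HA); apply: ler_wpM2r; first exact: ltW.
      by move: hlt; rewrite hc ltxx.
  + move=> b hbs.
    have hb' : 0 < absK b by rewrite hbs (lt_trans ltr01).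
    have hb : b != 0 by rewrite -(ab_eq0 HA) gt_eqF.
    have hb1 : 1 < absK b by rewrite hbs.
    have hb2 : absK (b ^+ 2) = absK b * absK b by rewrite expr2 (abM HA).
    have hc : absK (cc 0 b) = absK (b ^+ 2).
      apply: cc_eq => //; rewrite hb2.
      - by rewrite mulr0 addr0 (ab1 HA); nra.
      - by rewrite add0r (abM HA) hbs.
      - by rewrite mul0r (ab0 HA); apply: mulr_ge0; apply: ab_ge0.
    have [e [hd hm he _]] := C1b hb hc hb1.
    split; first by rewrite /is_fixedII hd.
    split.
      exists 1, 0, 0, 1, e; split; first by rewrite mulr0 subr0 mulr1 oner_neq0.
      split; first by apply he; rewrite hbs.
      by move=> t; rewrite !mob_id hm.
    have hs : s != 0 by rewrite -(ab_eq0 HA) gt_eqF // (lt_trans ltr01).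
    rewrite valFix_eq2 // subr0 (abN HA) (abV HA) hbs.
    apply: ltW; apply: (lt_trans _ hs1); rewrite invf_lt1 //.
    exact: (lt_trans ltr01).
Qed.

End Main.

Theorem proposition3p1 (K : closedFieldType) (R : realType) (absK : K -> R)
    (k : fieldType) (red : K -> k) (lambda3 s : K) :
  nonarch_abs absK -> complete_abs absK -> residue_map absK red ->
  s ^+ 2 = 1 - lambda3 ->
  let F := 'X^2 + s *: 'X + 1 : {poly K} in
  let G := 'X : {poly K} in
  (absK lambda3 <= 1 ->
     (forall a b : K, b != 0 ->
        (weight absK red F G a b = 1%N <-> same_point absK (a, b) (0, 1)))
     /\ W1 absK red F G 0 1)
  /\
  (1 < absK lambda3 ->
     (forall a b : K, b != 0 ->
        (weight absK red F G a b = 1%N <->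
           absK b = Num.sqrt (absK lambda3) /\ absK a <= absK b))
     /\ (forall b : K, absK b = Num.sqrt (absK lambda3) -> W3 absK red F G 0 b)).
Proof.
move=> HA _ HR hs F G.
exact: (main_result HA HR hs).
Qed.
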